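(* Let $R$ be a commutative ring with unit, $M$ an $R$-module, $N$ a submodule of $M$, $\mathbf A$ a $k\times l$ matrix with entries in $R$, and $r,s\ge1$ integers. (1) If $\mathbf A$ is partition regular over $M$ for $r+s$ colours, then either $\mathbf A$ is partition regular over $N$ for $r$ colours or $\mathbf A$ is partition regular over $M/N$ for $s$ colours. (2) If $M=\bigoplus_{i=1}^t M_i$ is a direct sum of finitely many $R$-modules $M_i$, then $\mathbf A$ is partition regular over $M$ if and only if $\mathbf A$ is partition regular over some $M_i$.
   Context: $\mathbf{A}$ is partition regular over an $R$-module $P$ for $r$ colours if for every map $\chi\colon P\to\{1,\dots,r\}$ there is $\mathbf{p}=(p_1,\dots,p_l)^{\intercal}\in P^l$ with $\mathbf{A}\mathbf{p}=0$, $\mathbf{p}\neq 0$ and $\chi(p_1)=\dots=\chi(p_l)$; it is partition regular over $P$ if this holds for every $r\ge1$. *)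

(* Defs.v *)
From HB Require Import structures.
From mathcomp Require Import all_boot all_order all_algebra.
Set Implicit Arguments. Unset Strict Implicit. Unset Printing Implicit Defensive.
Import GRing.Theory.
Local Open Scope ring_scope.

Definition mxapp (R : comPzRingType) (M : lmodType R) (k l : nat)
  (A : 'M[R]_(k, l)) (p : 'I_l -> M) : 'I_k -> M :=
  fun i => \sum_(j < l) A i j *: p j.

(* A is partition regular over the subset S of M for r colours
   (colours are 'I_r = {0,...,r-1}); a colouring of S is given by any
   map M -> 'I_r (only its values on S matter). *)
Definition pr_in_col (R : comPzRingType) (M : lmodType R) (k l : nat)
  (A : 'M[R]_(k, l)) (S : {pred M}) (r : nat) : Prop :=
  forall chi : M -> 'I_r,
    exists p : 'I_l -> M,
      (forall j, p j \in S) /\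
      (forall i, mxapp A p i = 0) /\
      (exists j, p j != 0) /\
      (exists c : 'I_r, forall j, chi (p j) = c).

Definition pr_in (R : comPzRingType) (M : lmodType R) (k l : nat)
  (A : 'M[R]_(k, l)) (S : {pred M}) : Prop :=
  forall r, (1 <= r)%N -> pr_in_col A S r.

Definition pr_col (R : comPzRingType) (P : lmodType R) (k l : nat)
  (A : 'M[R]_(k, l)) (r : nat) : Prop := pr_in_col A (@predT P) r.

Definition pr (R : comPzRingType) (P : lmodType R) (k l : nat)
  (A : 'M[R]_(k, l)) : Prop := pr_in A (@predT P).

Definition is_quotient (R : comPzRingType) (M Q : lmodType R) (N : {pred M})
  (pi : {linear M -> Q}) : Prop :=
  (forall q : Q, exists m : M, pi m = q) /\ (forall m : M, pi m = 0 <-> m \in N).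

Definition is_direct_sum (R : comPzRingType) (M : lmodType R) (t : nat)
  (Mi : 'I_t -> {pred M}) : Prop :=
  (forall i, submod_closed (Mi i)) /\
  (forall m : M, exists x : 'I_t -> M,
      (forall i, x i \in Mi i) /\ m = \sum_(i < t) x i) /\
  (forall x y : 'I_t -> M, (forall i, x i \in Mi i) -> (forall i, y i \in Mi i) ->
      \sum_(i < t) x i = \sum_(i < t) y i -> forall i, x i = y i).

(* Main.v *)
Require Import Defs.
From mathcomp Require Import all_boot all_order all_algebra.
From Stdlib Require Import Classical ClassicalEpsilon.
From mathcomp Require Import zify.
Set Implicit Arguments. Unset Strict Implicit. Unset Printing Implicit Defensive.
Import GRing.Theory.
Local Open Scope ring_scope.

Lemma mxapp_lin (R : comPzRingType) (M Q : lmodType R) (k l : nat)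
  (A : 'M[R]_(k, l)) (pi : {linear M -> Q}) (p : 'I_l -> M) i :
  pi (mxapp A p i) = mxapp A (fun j => pi (p j)) i.
Proof.
rewrite /mxapp raddf_sum; apply: eq_bigr => j _. exact: linearZZ.
Qed.

Lemma part1 (R : comPzRingType) (M : lmodType R) (k l : nat)
    (A : 'M[R]_(k, l)) :
  (forall (N : {pred M}) (Q : lmodType R) (pi : {linear M -> Q}) (r s : nat),
     submod_closed N -> is_quotient N pi -> (1 <= r)%N -> (1 <= s)%N ->
     pr_col M A (r + s) ->
     pr_in_col A N r \/ pr_col Q A s).
Proof.
move=> N Q pi r s _ [_ Hpi] _ _ Hpr.
destruct (classic (pr_in_col A N r)) as [H|H]; [by left| right].
move=> chiQ; apply: NNPP => HQ.
have [chiN HN] := not_all_ex_not _ _ H.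
pose chi (m : M) : 'I_(r + s) :=
  if m \in N then lshift s (chiN m) else rshift r (chiQ (pi m)).
have [p [_ [Hsol [[j0 Hj0] [c Hc]]]]] := Hpr chi.
have lr : forall (a : 'I_r) (b : 'I_s), lshift s a != rshift r b.
  move=> a b; apply/eqP => /(congr1 val) /= E; have := ltn_ord a; lia.
case Nj0: (p j0 \in N).
- apply: HN; exists p; split; last split; [|exact: Hsol|split; first by exists j0].
  + move=> j; case Nj: (p j \in N) => //.
    have := Hc j; have := Hc j0; rewrite /chi Nj Nj0 => <- E.
    by have := lr (chiN (p j0)) (chiQ (pi (p j))); rewrite E eqxx.
  + exists (chiN (p j0)) => j; case Nj: (p j \in N).
    * have := Hc j; have := Hc j0; rewrite /chi Nj Nj0 => <-; exact: lshift_inj.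
    * have := Hc j; have := Hc j0; rewrite /chi Nj Nj0 => <- E.
      by have := lr (chiN (p j0)) (chiQ (pi (p j))); rewrite E eqxx.
- have Nj : forall j, p j \in N = false.
    move=> j; case Nj: (p j \in N) => //.
    have := Hc j; have := Hc j0; rewrite /chi Nj Nj0 => <- E.
    by have := lr (chiN (p j)) (chiQ (pi (p j0))); rewrite E eqxx.
  apply: HQ; exists (fun j => pi (p j)); split=> //; split.
    by move=> i; rewrite -mxapp_lin Hsol linear0.
  split.
    exists j0; apply/eqP => /Hpi E; by rewrite E in Nj0.
  exists (chiQ (pi (p j0))) => j.
  have := Hc j; have := Hc j0; rewrite /chi !Nj => <-; exact: rshift_inj.
Qed.

Section DS.
Variables (R : comPzRingType) (M : lmodType R) (t : nat) (Mi : 'I_t -> {pred M}).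
Hypothesis HD : is_direct_sum Mi.

Lemma ds_sum (i : 'I_t) (I : finType) (a : I -> R) (x : I -> M) :
  (forall j, x j \in Mi i) -> \sum_j a j *: x j \in Mi i.
Proof.
have [H0 HL] := proj1 HD i.
move=> Hx; apply: (big_ind (fun v => v \in Mi i)) => //.
  move=> u v Hu Hv; rewrite -[u]scale1r; exact: HL.
move=> j _; rewrite -[_ *: _]addr0; exact: HL.
Qed.

Definition dcomp (m : M) : 'I_t -> M :=
  proj1_sig (constructive_indefinite_description _ (proj1 (proj2 HD) m)).

Lemma dcompP m : (forall i, dcomp m i \in Mi i) /\ m = \sum_(i < t) dcomp m i.
Proof. rewrite /dcomp; case: constructive_indefinite_description => //. Qed.

Lemma dcomp_uniq m (x : 'I_t -> M) : (forall i, x i \in Mi i) -> m = \sum_i x i ->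
  forall i, dcomp m i = x i.
Proof.
move=> Hx Hm; have [Hc Hm'] := dcompP m.
apply: (proj2 (proj2 HD)) => //; by rewrite -Hm -Hm'.
Qed.

Lemma dcomp_lin (I : finType) (a : I -> R) (p : I -> M) i :
  dcomp (\sum_j a j *: p j) i = \sum_j a j *: dcomp (p j) i.
Proof.
apply: (dcomp_uniq (x := fun i => \sum_j a j *: dcomp (p j) i)).
  move=> i'; apply: ds_sum => j; exact: (proj1 (dcompP _)).
rewrite exchange_big /=; apply: eq_bigr => j _.
by rewrite -scaler_sumr -(proj2 (dcompP _)).
Qed.

Lemma dcomp_nz m : m != 0 -> exists i, dcomp m i != 0.
Proof.
move=> Hm; apply: NNPP => H; apply: (negP Hm); apply/eqP.
rewrite (proj2 (dcompP m)) big1 // => i _.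
apply: NNPP => Hi; apply: H; exists i; exact/eqP.
Qed.

End DS.

Lemma part2 (R : comPzRingType) (M : lmodType R) (k l : nat)
    (A : 'M[R]_(k, l)) :
  (forall (t : nat) (Mi : 'I_t -> {pred M}),
     is_direct_sum Mi ->
     (pr M A <-> exists i : 'I_t, pr_in A (Mi i))).
Proof.
move=> t Mi HD; split; last first.
  move=> [i Hi] r Hr chi; have [p [_ H]] := Hi r Hr chi; by exists p.
move=> Hpr; apply: NNPP => Hno.
have Hbad : forall i, exists rh : nat * (M -> nat), (0 < rh.1)%N /\
   (forall m, (rh.2 m < rh.1)%N) /\ forall p : 'I_l -> M, (forall j, p j \in Mi i) ->
   (forall i', mxapp A p i' = 0) -> (exists j, p j != 0) ->
   ~ (exists c : nat, forall j, rh.2 (p j) = c).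
  move=> i; have : ~ pr_in A (Mi i) by move=> H; apply: Hno; exists i.
  rewrite /pr_in => /not_all_ex_not [r Hr0].
  have [r1 Hr] := imply_to_and _ _ Hr0.
  have [chi Hchi] := not_all_ex_not _ _ Hr.
  exists (r, fun m => nat_of_ord (chi m)); split; first exact: r1.
  split; first by move=> m; exact: ltn_ord.
  move=> p Hp Hs [j0 Hj0] [c Hc].
  apply: Hchi; exists p; split=> //; split=> //; split; first by exists j0.
  exists (chi (p j0)) => j; apply: val_inj; have := Hc j; have := Hc j0; move=> /= -> ->. by [].
pose F i := proj1_sig (constructive_indefinite_description _ (Hbad i)).
have HF i : (0 < (F i).1)%N /\
   (forall m, ((F i).2 m < (F i).1)%N) /\ forall p : 'I_l -> M, (forall j, p j \in Mi i) ->
   (forall i', mxapp A p i' = 0) -> (exists j, p j != 0) ->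
   ~ (exists c : nat, forall j, (F i).2 (p j) = c).
  rewrite /F; case: constructive_indefinite_description => //.
pose r i := (F i).1. pose g i := (F i).2.
pose B := (\max_(i < t) r i)%N.
pose col (m : M) : nat := match [pick i : 'I_t | dcomp HD m i != 0] with
   Some i => (1 + i * B + g i (dcomp HD m i))%N | None => 0%N end.
have gB i m : (g i m < B)%N.
  apply: (@leq_trans (r i)); first exact: (proj1 (proj2 (HF i))).
  rewrite /B (bigD1 i) //=; exact: leq_maxl.
have colB m : (col m < (t*B).+1)%N.
  rewrite /col; case: pickP => [i _|_] //.
  have := ltn_ord i; have := gB i (dcomp HD m i); nia.
have [p [_ [Hs [[j0 Hj0] [c Hc]]]]] := Hpr (t*B).+1 isT (fun m => inord (col m)).
have Hcol j : col (p j) = col (p j0).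
  by have := Hc j; rewrite -(Hc j0) => /(congr1 val); rewrite /= !inordK.
have [i0 Hi0] := dcomp_nz HD Hj0.
have [i1 [Hi1 Hv]] : exists i1, dcomp HD (p j0) i1 != 0 /\
    col (p j0) = (1 + i1 * B + g i1 (dcomp HD (p j0) i1))%N.
  rewrite /col; case: pickP => [i Hi|Hn]; first by exists i.
  by have := Hn i0; rewrite Hi0.
have Hj j : dcomp HD (p j) i1 != 0 /\ g i1 (dcomp HD (p j) i1) = g i1 (dcomp HD (p j0) i1).
  have := Hcol j; rewrite Hv /col; case: pickP => [i Hi|_] E; last by lia.
  have gi := gB i (dcomp HD (p j) i); have gi1 := gB i1 (dcomp HD (p j0) i1).
  have Eii : nat_of_ord i = nat_of_ord i1 by nia.
  have Eo : i = i1 by apply: val_inj.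
  subst i; split=> //; lia.
apply: (proj2 (proj2 (HF i1))) (fun j => dcomp HD (p j) i1) _ _ _ _.
- move=> j; exact: (proj1 (dcompP HD _)).
- move=> i'; rewrite /mxapp -(dcomp_lin HD).
  have -> : \sum_(j < l) A i' j *: p j = 0 by exact: Hs.
  apply: (dcomp_uniq HD (x := fun _ => 0)) => //; last by rewrite big1.
  move=> i; exact: (proj1 (proj1 HD i)).
- by exists j0.
- by exists (g i1 (dcomp HD (p j0) i1)) => j; exact: (proj2 (Hj j)).
Qed.

Theorem proposition1p6 (R : comPzRingType) (M : lmodType R) (k l : nat)
    (A : 'M[R]_(k, l)) :
  (forall (N : {pred M}) (Q : lmodType R) (pi : {linear M -> Q}) (r s : nat),
     submod_closed N -> is_quotient N pi -> (1 <= r)%N -> (1 <= s)%N ->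
     pr_col M A (r + s) ->
     pr_in_col A N r \/ pr_col Q A s) /\
  (forall (t : nat) (Mi : 'I_t -> {pred M}),
     is_direct_sum Mi ->
     (pr M A <-> exists i : 'I_t, pr_in A (Mi i))).
Proof. split; [exact: part1 | exact: part2]. Qed.
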